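(* Let $(\mathcal G,L,I)$ be a relational symplectic groupoid. Then $L_2:=L_3\circ(L_1\times Id)$ also satisfies $$L_2=L_3\circ(Id\times L_1).$$
   Context: Relations: for sets $A,B$, a relation $R:A\nrightarrow B$ is a subset $R\subset A\times B$. The composition of $R:A\nrightarrow B$ and $R':B\nrightarrow C$ is $R'\circ R=\{(a,c): \exists b,\ (a,b)\in R,\ (b,c)\in R'\}$. The transpose is $R^*=\{(b,a):(a,b)\in R\}$. Products $R_1\times R_2:A_1\times A_2\nrightarrow B_1\times B_2$ are taken componentwise. $*$ denotes a one-point set, and a relation $*\nrightarrow B$ is identified with a subset of $B$; in particular $L_1\times Id$ is the relation $\mathcal G\nrightarrow\mathcal G\times\mathcal G$ given by $\{(y,(l,y)):l\in L_1\}$, and $Id\times L_1$ is $\{(y,(y,l)):l\in L_1\}$. For a (possibly infinite-dimensional, weak) symplectic manifold $\mathcal M$, $\bar{\mathcal M}$ denotes $\mathcal M$ with the negated symplectic form. An immersed canonical relation $\mathcal M\nrightarrow\mathcal N$ is an immersed Lagrangian submanifold of $\bar{\mathcal M}\times\mathcal N$. A relational symplectic groupoid is a triple $(\mathcal G,L,I)$ consisting of: - a weak symplectic manifold $\mathcal G$ (the induced map $T\mathcal G\to T^*\mathcal G$ is injective); - an immersed Lagrangian submanifold $L\subset\mathcal G^3$; - an antisymplectomorphism $I:\mathcal G\to\mathcal G$. Notation: - $L_{rel}:\mathcal G\times\mathcal G\nrightarrow\bar{\mathcal G}$ is the subset $\{((x,y),z):(x,y,z)\in L\}$. - $I_{rel}:\bar{\mathcal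 G}\nrightarrow\mathcal G$ is the graph $\{(x,I(x))\}$. - $\overline{L_{rel}}:\bar{\mathcal G}\times\bar{\mathcal G}\nrightarrow\mathcal G$ and $\overline{I_{rel}}:\mathcal G\nrightarrow\bar{\mathcal G}$ are the same subsets regarded between the sign-reversed manifolds. - $T_{rel}$ and $\overline{T_{rel}}$ denote the graph of the transposition $(x,y)\mapsto(y,x)$ on $\mathcal G\times\mathcal G$, respectively on $\bar{\mathcal G}\times\bar{\mathcal G}$. - $Id$ denotes the graph of the identity. - $L_I:*\nrightarrow\mathcal G\times\mathcal G$ is the subset $\{(x,I(x)):x\in\mathcal G\}$. - $L_3:=I_{rel}\circ L_{rel}:\mathcal G\times\mathcal G\nrightarrow\mathcal G$, i.e. $L_3=\{((x,y),I(z)):(x,y,z)\in L\}$. Axioms: - (A.1) $L$ is cyclically symmetric: $(x,y,z)\in L\Rightarrow(y,z,x)\in L$. - (A.2) $I^2=\mathrm{id}$. - (A.3) $I_{rel}\circ L_{rel}=\overline{L_{rel}}\circ\overline{T_{rel}}\circ(\overline{I_{rel}}\times\overline{I_{rel}})$. - (A.4) $L_3\circ(L_3\times Id)=L_3\circ(Id\times L_3)$, and this is an immersed Lagrangian submanifold (as a relation $\mathcal G^3\nrightarrow\mathcal G$). - (A.5) $L_1:=L_3\circ L_I$ is an immersed Lagrangian submanifold of $\mathcal G$. - (A.6) $L_3\circ(L_1\times L_1)=L_1$. - (A.7) $L_2:=L_3\circ(L_1\times Id)$ is an immersed Lagrangian submanifold of $\bar{\mathcal G}\times\mathcal G$. 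*)

(* Defs.v *)
(* purely set-theoretic relations, geometric conditions abstract. *)
Set Implicit Arguments.

Definition rel (A B : Type) := A -> B -> Prop.

Definition rcomp {A B C : Type} (R' : rel B C) (R : rel A B) : rel A C :=
  fun a c => exists b, R a b /\ R' b c.

Definition rid (A : Type) : rel A A := fun a b => a = b.

Definition rprod {A1 A2 B1 B2 : Type} (R1 : rel A1 B1) (R2 : rel A2 B2)
  : rel (A1 * A2) (B1 * B2) :=
  fun a b => R1 (fst a) (fst b) /\ R2 (snd a) (snd b).

Definition rtransp {A : Type} : rel (A * A) (A * A) :=
  fun a b => b = (snd a, fst a).

Definition graph {A B : Type} (f : A -> B) : rel A B := fun a b => b = f a.

Section RSG.
Variables (G : Type) (L : G -> G -> G -> Prop) (I : G -> G).

Definition L_rel : rel (G * G) G := fun xy z => L (fst xy) (snd xy) z.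
Definition I_rel : rel G G := graph I.
Definition L3 : rel (G * G) G := rcomp I_rel L_rel.
Definition L_I : rel unit (G * G) := fun _ p => snd p = I (fst p).
Definition L1 : G -> Prop := fun w => rcomp L3 L_I tt w.
Definition L1xId : rel G (G * G) := fun y p => L1 (fst p) /\ snd p = y.
Definition IdxL1 : rel G (G * G) := fun y p => fst p = y /\ L1 (snd p).
Definition L2 : rel G G := rcomp L3 L1xId.
(* G^3 as (G * G) * G in the first composite, G * (G * G) in the second;
   we compare them via the canonical reassociation. *)
Definition assocL : rel ((G * G) * G) G := rcomp L3 (rprod L3 (@rid G)).
Definition assocR : rel (G * (G * G)) G := rcomp L3 (rprod (@rid G) L3).
End RSG.

Record GeomData (G : Type) := {
  weak_symplectic : Prop;
  imm_lag3 : (G -> G -> G -> Prop) -> Prop;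
  antisymplecto : (G -> G) -> Prop;
  imm_lag_rel3 : (G -> G -> G -> G -> Prop) -> Prop;      (* imm. Lagrangian relation G^3 -/-> G *)
  imm_lag1 : (G -> Prop) -> Prop;
  imm_lag2 : (G -> G -> Prop) -> Prop                     (* imm. Lagrangian in Gbar x G *)
}.

Definition RelSympGroupoid (G : Type) (D : GeomData G)
  (L : G -> G -> G -> Prop) (I : G -> G) : Prop :=
  weak_symplectic D /\ imm_lag3 D L /\ antisymplecto D I /\
  (forall x y z, L x y z -> L y z x) /\
  (forall x, I (I x) = x) /\
  (forall xy z, L3 L I xy z <->
               rcomp (L_rel L) (rcomp rtransp (rprod (I_rel I) (I_rel I))) xy z) /\
  (forall x y z w, assocL L I ((x, y), z) w <-> assocR L I (x, (y, z)) w) /\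
            imm_lag_rel3 D (fun x y z w => assocL L I ((x, y), z) w) /\
  imm_lag1 D (L1 L I) /\
  (forall w, rcomp (L3 L I) (fun (_ : unit) p => L1 L I (fst p) /\ L1 L I (snd p)) tt w
                <-> L1 L I w) /\
  imm_lag2 D (L2 L I).

(* Main.v *)
Require Import Defs.

Theorem mainTheorem3 (G : Type) (D : GeomData G)
  (L : G -> G -> G -> Prop) (I : G -> G) :
  RelSympGroupoid D L I ->
  forall y z, L2 L I y z <-> rcomp (L3 L I) (IdxL1 L I) y z.
Proof.
  intros H.
  destruct H as (_ & _ & _ & Hcyc & Hinv & _ & Hass & _).
  assert (Hass' : forall x y z w, assocR L I (x, (y, z)) w -> assocL L I ((x, y), z) w)
    by (intros; apply Hass; assumption).
  assert (HassL : forall x y z w, assocL L I ((x, y), z) w -> assocR L I (x, (y, z)) w)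
    by (intros; apply Hass; assumption).
  clear Hass.
  assert (K : forall y z, L2 L I y z -> rcomp (L3 L I) (IdxL1 L I) y z).
  { intros y z [[l y'] [[Hl Hy] Hz]]. simpl in Hl, Hy. subst y'.
    destruct Hl as [[x x'] [Hx Hlx]]. unfold L_I in Hx; simpl in Hx. subst x'.
    assert (A : assocL L I ((x, I x), y) z).
    { exists (l, y). split; [split; simpl; [exact Hlx | reflexivity] | exact Hz]. }
    apply HassL in A.
    destruct A as [[x'' u] [[Hx1 Hu] Hz2]]. simpl in Hx1, Hu. unfold rid in Hx1. subst x''.
    destruct Hu as [t [Ht Hut]]. unfold I_rel, graph in Hut. subst u.
    assert (B : assocL L I ((y, I (I t)), I t) z).
    { exists (x, I t). split; [split; simpl | exact Hz2].
      - exists (I x). split.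
        + unfold L_rel; simpl. rewrite Hinv. apply Hcyc. exact Ht.
        + unfold I_rel, graph. symmetry. apply Hinv.
      - reflexivity. }
    apply HassL in B.
    destruct B as [[y'' m] [[Hy1 Hm] Hz3]]. simpl in Hy1, Hm. unfold rid in Hy1. subst y''.
    exists (y, m). split; [split; simpl; [reflexivity|] | exact Hz3].
    exists (I (I t), I t). split; [unfold L_I; simpl; symmetry; apply Hinv | exact Hm]. }
  intros y z; split; [apply K|].
  intros [[y' m] [[Hy Hm] Hz]]. simpl in Hy, Hm. subst y'.
  destruct Hm as [[x x'] [Hx Hmx]]. unfold L_I in Hx; simpl in Hx. subst x'.
  assert (A : assocR L I (y, (x, I x)) z).
  { exists (y, m). split; [split; simpl; [reflexivity | exact Hmx] | exact Hz]. }
  apply Hass' in A.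
  destruct A as [[v x''] [[Hv Hx1] Hz2]]. simpl in Hv, Hx1. unfold rid in Hx1. subst x''.
  destruct Hv as [t [Ht Hvt]]. unfold I_rel, graph in Hvt. subst v.
  assert (B : assocR L I (I t, (t, y)) z).
  { exists (I t, I x). split; [split; simpl | exact Hz2].
    - reflexivity.
    - exists x. split.
      + unfold L_rel; simpl. apply Hcyc. apply Hcyc. exact Ht.
      + unfold I_rel, graph. reflexivity. }
  apply Hass' in B.
  destruct B as [[l y''] [[Hl Hy1] Hz3]]. simpl in Hl, Hy1. unfold rid in Hy1. subst y''.
  exists (l, y). split; [split; simpl; [|reflexivity] | exact Hz3].
  exists (I t, t). split; [unfold L_I; simpl; symmetry; apply Hinv | exact Hl].
Qed.
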